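(* Let $1\le k<d$, $0\le\ell<d$ and $t\ge0$ be integers. If $\ell\ge\min\{k,t\}$, then $\mathrm{Pol}^\ell_t(\mathcal{G}_{k,d})=\mathrm{Pol}_t(\mathcal{G}_{k,d})$.
   Context: $\mathscr{H}_d$ denotes the real symmetric $d\times d$ matrices with $\langle A,B\rangle=\operatorname{trace}(AB)$. $\mathcal{G}_{k,d}=\{P\in\mathscr{H}_d:P^2=P,\ \operatorname{trace}(P)=k\}$. $\mathrm{Pol}^\ell_t(\mathcal{G}_{k,d})$ is the linear span of the functions $P\mapsto\langle M,P\rangle^s$ on $\mathcal{G}_{k,d}$, with $M\in\mathscr{H}_d$ of rank at most $\ell$ and $0\le s\le t$. $\mathrm{Pol}_t(\mathcal{G}_{k,d})$ is the space of restrictions to $\mathcal{G}_{k,d}$ of polynomials of degree at most $t$ on $\mathscr{H}_d$ (in the matrix entries). *)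

(* Defs.v *)
From HB Require Import structures.
From mathcomp Require Import all_boot all_order all_algebra.
From mathcomp Require Import reals.
From mathcomp Require Import mpoly.
Set Implicit Arguments. Unset Strict Implicit. Unset Printing Implicit Defensive.
Import Order.TTheory GRing.Theory Num.Theory.
Local Open Scope ring_scope.

Definition symmx (R : realType) (d : nat) (A : 'M[R]_d) : Prop := A^T = A.

Definition mxdot (R : realType) (d : nat) (A B : 'M[R]_d) : R := \tr (A *m B).

Definition grass (R : realType) (k d : nat) (P : 'M[R]_d) : Prop :=
  symmx P /\ P *m P = P /\ \tr P = k%:R.

Definition in_PolL (R : realType) (k d l t : nat) (f : 'M[R]_d -> R) : Prop :=
  exists (n : nat) (c : 'I_n -> R) (M : 'I_n -> 'M[R]_d) (s : 'I_n -> nat),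
    (forall i, symmx (M i) /\ (\rank (M i) <= l)%N /\ (s i <= t)%N) /\
    (forall P, grass k P -> f P = \sum_(i < n) c i * mxdot (M i) P ^+ s i).

(* f lies in Pol_t(G_{k,d}): on G_{k,d} it agrees with a polynomial of total
   degree at most t in the d*d matrix entries (variables indexed via mxvec). *)
Definition in_Pol (R : realType) (k d t : nat) (f : 'M[R]_d -> R) : Prop :=
  exists p : {mpoly R[d * d]},
    (msize p <= t.+1)%N /\
    (forall P, grass k P -> f P = p.@[fun j => mxvec P 0 j]).

(* Main.v *)
Require Import Defs.
From HB Require Import structures.
From mathcomp Require Import all_boot all_order all_algebra.
From mathcomp Require Import reals.
From mathcomp Require Import mpoly.
From mathcomp Require Import zify ring lra.
From Stdlib Require Import Classical.
Set Implicit Arguments. Unset Strict Implicit. Unset Printing Implicit Defensive.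
Import Order.TTheory GRing.Theory Num.Theory.
Local Open Scope ring_scope.

Section S.
Variable R : realType.
Variable d : nat.
Implicit Types P M A : 'M[R]_d.

Lemma sum_mxvec (F : 'I_(d * d) -> R) :
  \sum_(j < d * d) F j = \sum_(i < d) \sum_(j < d) F (mxvec_index i j).
Proof.
rewrite pair_big /=.
rewrite (reindex (uncurry (@mxvec_index d d))) /=; last exact: curry_mxvec_bij.
by apply: eq_bigr => -[i j].
Qed.

Lemma mxdot_vec M P : mxdot M P = \sum_j mxvec M^T 0 j * mxvec P 0 j.
Proof.
rewrite /mxdot sum_mxvec exchange_big /mxtrace; apply: eq_bigr => i _.
rewrite mxE; apply: eq_bigr => j _. by rewrite !mxvecE mxE.
Qed.

Definition lin (a : 'rV[R]_(d * d)) : {mpoly R[d * d]} := \sum_j a 0 j *: 'X_j.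

Lemma meval_lin a v : (lin a).@[v] = \sum_j a 0 j * v j.
Proof.
rewrite /lin raddf_sum; apply: eq_bigr => j _ /=; by rewrite mevalZ mevalXU.
Qed.

Lemma msize_lin a : (msize (lin a) <= 2)%N.
Proof.
apply: leq_trans (msize_sum _ _ _) _.
apply/bigmax_leqP => j _; apply: leq_trans (msizeZ_le _ _) _.
by rewrite msizeX mdeg1.
Qed.

Lemma msize_exp (q : {mpoly R[d * d]}) s : (msize q <= 2)%N -> (msize (q ^+ s) <= s.+1)%N.
Proof.
move=> hq; elim: s => [|s IH]; first by rewrite expr0 msize1.
rewrite exprSr.
have [->|nz1] := eqVneq (q ^+ s) 0; first by rewrite mul0r msize0.
have [->|nz2] := eqVneq q 0; first by rewrite mulr0 msize0.
rewrite msizeM //; move: IH hq; set a := msize (q ^+ s); set b := msize q; lia.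
Qed.

Lemma PolL_Pol k l t (f : 'M[R]_d -> R) : @in_PolL R k d l t f -> @in_Pol R k d t f.
Proof.
case=> n [c [M [s [hM hf]]]].
exists (\sum_(i < n) c i *: (lin (mxvec (M i)^T)) ^+ s i); split.
- apply: leq_trans (msize_sum _ _ _) _; apply/bigmax_leqP => i _.
  apply: leq_trans (msizeZ_le _ _) _; apply: leq_trans (msize_exp _ (msize_lin _)) _.
  by have [_ [_ ]] := hM i.
- move=> P hP; rewrite hf //.
  have -> : forall (v : 'I_(d * d) -> R) (F : 'I_n -> {mpoly R[d * d]}), (\sum_(i < n) F i).@[v] = \sum_(i < n) (F i).@[v].
    by move=> v F; rewrite raddf_sum.
  apply: eq_bigr => i _.
  by rewrite mevalZ rmorphXn /= meval_lin mxdot_vec.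
Qed.

Fixpoint Gf (h : R -> R) (ys : seq R) (a : R) : R :=
  match ys with
  | [::] => h a
  | y :: ys' => Gf h ys' (a + y) - Gf h ys' a
  end.

Lemma Gf_ext h1 h2 ys a : h1 =1 h2 -> Gf h1 ys a = Gf h2 ys a.
Proof. by move=> e; elim: ys a => [|y ys IH] a /=; rewrite ?e ?IH. Qed.

Lemma Gf_shift h ys a y : Gf h ys (a + y) = Gf (fun x => h (x + y)) ys a.
Proof.
elim: ys a => [|z ys IH] a //=.
by rewrite addrAC !IH.
Qed.

Lemma Gf_sum n (F : 'I_n -> R -> R) ys a :
  Gf (fun x => \sum_(j < n) F j x) ys a = \sum_(j < n) Gf (F j) ys a.
Proof.
elim: ys a => [|z ys IH] a //=.
by rewrite !IH -sumrB.
Qed.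

Lemma Gf_scale c h ys a : Gf (fun x => c * h x) ys a = c * Gf h ys a.
Proof.
elim: ys a => [|z ys IH] a //=.
by rewrite !IH mulrBr.
Qed.

Lemma Gf_pow ys :
  (forall m a, (m < size ys)%N -> Gf (fun x => x ^+ m) ys a = 0) /\
  (forall a, Gf (fun x => x ^+ size ys) ys a = (size ys)`!%:R * \prod_(y <- ys) y).
Proof.
elim: ys => [|y ys [H1 H2]]; first by split => // a; rewrite /= big_nil expr0 mulr1.
have key : forall m a, Gf (fun x => x ^+ m) (y :: ys) a =
    \sum_(i < m) (y ^+ (m - i) *+ 'C(m, i)) * Gf (fun x => x ^+ i) ys a.
  move=> m a /=; rewrite Gf_shift.
  rewrite (@Gf_ext _ (fun x => \sum_(i < m.+1) (y ^+ (m - i) *+ 'C(m, i)) * x ^+ i)); last first.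
    by move=> x; rewrite addrC exprDn; apply: eq_bigr => i _; rewrite mulrnAl.
  rewrite Gf_sum big_ord_recr /= subnn expr0 binn Gf_scale mul1r addrK.
  by apply: eq_bigr => i _; rewrite Gf_scale.
split.
  move=> m a hm; rewrite key big1 // => i _; rewrite H1 ?mulr0 //.
  by apply: leq_trans (ltn_ord i) _; rewrite -ltnS.
move=> a; rewrite key /= big_ord_recr /= big1; last first.
  by move=> i _; rewrite H1 ?mulr0.
rewrite H2 add0r subSn // subnn expr1 binSn big_cons factS natrM.
by rewrite mulr_natr; ring.
Qed.

Definition inPL k l t (f : 'M[R]_d -> R) :=
  exists L : seq (R * 'M[R]_d * nat),
    (forall e, e \in L -> symmx e.1.2 /\ (\rank e.1.2 <= l)%N /\ (e.2 <= t)%N) /\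
    (forall P, grass k P -> f P = \sum_(e <- L) e.1.1 * mxdot e.1.2 P ^+ e.2).

Lemma inPL_PolL k l t f : inPL k l t f -> @in_PolL R k d l t f.
Proof.
case=> L [hL hf].
set e0 : R * 'M[R]_d * nat := (0, 0, 0%N).
exists (size L), (fun i => (nth e0 L i).1.1), (fun i => (nth e0 L i).1.2), (fun i => (nth e0 L i).2).
split; first by move=> i; apply: hL; rewrite mem_nth.
by move=> P hP; rewrite hf // (big_nth e0) big_mkord.
Qed.

Lemma inPL_ext k l t f g : inPL k l t f -> (forall P, grass k P -> f P = g P) -> inPL k l t g.
Proof. by case=> L [hL hf] e; exists L; split => // P hP; rewrite -e // hf. Qed.

Lemma inPL0 k l t : inPL k l t (fun _ => 0).
Proof. by exists [::]; split => // P _; rewrite big_nil. Qed.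

Lemma inPL_add k l t f g : inPL k l t f -> inPL k l t g -> inPL k l t (fun P => f P + g P).
Proof.
case=> L1 [h1 f1] [L2 [h2 f2]]; exists (L1 ++ L2); split.
  by move=> e; rewrite mem_cat => /orP[/h1|/h2].
by move=> P hP; rewrite big_cat f1 // f2.
Qed.

Lemma inPL_scale k l t c f : inPL k l t f -> inPL k l t (fun P => c * f P).
Proof.
case=> L [h1 f1]; exists [seq (c * e.1.1, e.1.2, e.2) | e <- L]; split.
  by move=> e /mapP [e' /h1 he ->].
by move=> P hP; rewrite f1 // big_map mulr_sumr; apply: eq_bigr => e _; rewrite mulrA.
Qed.

Lemma inPL_sum k l t (I : eqType) (r : seq I) (F : I -> 'M[R]_d -> R) :
  (forall x, x \in r -> inPL k l t (F x)) -> inPL k l t (fun P => \sum_(x <- r) F x P).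
Proof.
elim: r => [|x r IH] h.
  by apply: inPL_ext (inPL0 k l t) _ => P _; rewrite big_nil.
have IH' : inPL k l t (fun P => \sum_(x <- r) F x P).
  by apply: IH => y hy; apply: h; rewrite inE hy orbT.
apply: inPL_ext (inPL_add (h x (mem_head _ _)) IH') _.
by move=> P _ /=; rewrite big_cons.
Qed.

Lemma inPL_mono k l t (M : 'M[R]_d) s :
  symmx M -> (\rank M <= l)%N -> (s <= t)%N -> inPL k l t (fun P => mxdot M P ^+ s).
Proof.
move=> h1 h2 h3; exists [:: (1, M, s)]; split; first by move=> e; rewrite inE => /eqP ->.
by move=> P _; rewrite big_seq1 mul1r.
Qed.

Lemma mxdotD A B P : mxdot (A + B) P = mxdot A P + mxdot B P.
Proof. by rewrite /mxdot mulmxDl mxtraceD. Qed.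

Lemma mxdot0 P : mxdot 0 P = 0.
Proof. by rewrite /mxdot mul0mx mxtrace0. Qed.

Fixpoint Hm (As : seq 'M[R]_d) (A0 : 'M[R]_d) : seq (R * 'M[R]_d) :=
  match As with
  | [::] => [:: (1, A0)]
  | A :: As' => Hm As' (A0 + A) ++ [seq (- e.1, e.2) | e <- Hm As' A0]
  end.

Lemma Hm_eval h P As A0 :
  Gf h [seq mxdot A P | A <- As] (mxdot A0 P) = \sum_(e <- Hm As A0) e.1 * h (mxdot e.2 P).
Proof.
elim: As A0 => [|A As IH] A0 /=; first by rewrite big_seq1 mul1r.
rewrite -mxdotD !IH big_cat big_map /=; congr (_ + _).
by rewrite -sumrN; apply: eq_bigr => e _; rewrite mulNr.
Qed.

Lemma Hm_prop As A0 :
  (forall A, A \in As -> symmx A /\ (\rank A <= 1)%N) -> symmx A0 ->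
  forall e, e \in Hm As A0 -> symmx e.2 /\ (\rank e.2 <= \rank A0 + size As)%N.
Proof.
elim: As A0 => [|A As IH] A0 hA h0 e /=.
  by rewrite inE => /eqP -> /=; rewrite addn0.
have hA' : forall B, B \in As -> symmx B /\ (\rank B <= 1)%N.
  by move=> B hB; apply: hA; rewrite inE hB orbT.
have [sA rA] := hA A (mem_head _ _).
rewrite mem_cat => /orP [he | /mapP [e' he' ->] /=].
  have [|s1 r1] := IH (A0 + A) hA' _ e he.
    by rewrite /symmx linearD /= h0 sA.
  split => //; apply: leq_trans r1 _; rewrite addnS -addSn leq_add2r.
  by apply: leq_trans (mxrank_add _ _) _; rewrite -addn1 leq_add2l.
have [s1 r1] := IH A0 hA' h0 e' he'; split => //; apply: leq_trans r1 _; by rewrite leq_add2l.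
Qed.

Lemma polar_inPL k l t (As : seq 'M[R]_d) :
  (forall A, A \in As -> symmx A /\ (\rank A <= 1)%N) -> (size As <= t)%N -> (t <= l)%N ->
  inPL k l t (fun P => \prod_(A <- As) mxdot A P).
Proof.
move=> hA hs hl.
set s := size As.
have hfact : (s`!%:R : R) != 0 by rewrite pnatr_eq0 -lt0n fact_gt0.
have e1 : forall P, \prod_(A <- As) mxdot A P =
    \sum_(e <- Hm As 0) (e.1 / s`!%:R) * mxdot e.2 P ^+ s.
  move=> P; have [_ H2] := Gf_pow [seq mxdot A P | A <- As].
  move: (H2 (mxdot 0 P)); rewrite size_map Hm_eval big_map -/s => H.
  apply: (mulfI hfact); rewrite -H mulr_sumr; apply: eq_bigr => e _.
  by rewrite mulrA [_ * (e.1 / _)]mulrC divfK.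
apply: inPL_ext (inPL_sum (r := Hm As 0) (F := fun e P => (e.1 / s`!%:R) * mxdot e.2 P ^+ s) _) _.
  move=> e he; apply: inPL_scale.
  have [|s1 r1] := Hm_prop hA _ he; first by rewrite /symmx trmx0.
  by apply: inPL_mono => //; move: r1; rewrite mxrank0 add0n => r1; apply: leq_trans r1 (leq_trans hs hl).
by move=> P _; rewrite e1.
Qed.

Definition ep P (xs : seq 'I_(d * d)) := \prod_(x <- xs) mxvec P 0 x.

Lemma qf_delta P i j : ((delta_mx 0 i : 'rV[R]_d) *m P *m (delta_mx 0 j : 'rV[R]_d)^T) 0 0 = P i j.
Proof. by rewrite trmx_delta -rowE -colE !mxE. Qed.

Lemma mxdot_rank1 (u : 'rV[R]_d) P : mxdot (u^T *m u) P = (u *m P *m u^T) 0 0.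
Proof.
rewrite /mxdot -mulmxA mxtrace_mulC /mxtrace big_ord1.
by rewrite [ord0]ord1.
Qed.

Lemma rank1_ok (u : 'rV[R]_d) : symmx (u^T *m u) /\ (\rank (u^T *m u) <= 1)%N.
Proof.
split; first by rewrite /symmx trmx_mul trmxK.
by apply: leq_trans (mxrankM_maxr _ _) (rank_leq_row _).
Qed.

Lemma mxaddE m n (A B : 'M[R]_(m, n)) i j : (A + B) i j = A i j + B i j.
Proof. by rewrite mxE. Qed.
Lemma mxoppE m n (A : 'M[R]_(m, n)) i j : (- A) i j = - A i j.
Proof. by rewrite mxE. Qed.

Lemma entry_rank1 x :
  exists U W : 'M[R]_d, (symmx U /\ (\rank U <= 1)%N) /\ (symmx W /\ (\rank W <= 1)%N) /\
    forall P, symmx P -> mxvec P 0 x = mxdot U P / 4%:R - mxdot W P / 4%:R.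
Proof.
case/mxvec_indexP: x => a b.
set ra : 'rV[R]_d := delta_mx 0 a; set rb : 'rV[R]_d := delta_mx 0 b.
exists ((ra + rb)^T *m (ra + rb)), ((ra - rb)^T *m (ra - rb)).
split; first exact: rank1_ok. split; first exact: rank1_ok.
move=> P hP; rewrite !mxdot_rank1 mxvecE !linearD /= !linearN /=.
rewrite !(mulmxDl, mulmxDr, mulNmx, mulmxN) !(mxaddE, mxoppE) !qf_delta.
have -> : P b a = P a b by rewrite -{1}hP mxE.
by field.
Qed.

Lemma ep_rank1 xs : exists L : seq (R * seq 'M[R]_d),
  (forall e, e \in L -> size e.2 = size xs /\ forall A, A \in e.2 -> symmx A /\ (\rank A <= 1)%N) /\
  forall P, symmx P -> ep P xs = \sum_(e <- L) e.1 * \prod_(A <- e.2) mxdot A P.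
Proof.
elim: xs => [|x xs [L [hL hf]]].
  exists [:: (1, [::])]; split; first by move=> e; rewrite inE => /eqP -> /=.
  by move=> P _; rewrite /ep !big_nil big_seq1 big_nil mulr1.
have [U [W [hU [hW hx]]]] := entry_rank1 x.
exists ([seq (e.1 / 4%:R, U :: e.2) | e <- L] ++ [seq (- (e.1 / 4%:R), W :: e.2) | e <- L]).
split.
  move=> e; rewrite mem_cat => /orP [] /mapP [e' he' ->] /=;
    have [s1 s2] := hL e' he'; (split; first by rewrite s1);
    move=> A; rewrite inE => /orP [/eqP -> //|]; exact: s2.
move=> P hP; rewrite /ep big_cons -/(ep P xs) hf // hx // big_cat !big_map.
rewrite mulrBl !mulr_sumr -sumrN; congr (_ + _); apply: eq_bigr => e _; rewrite !big_cons /=; ring.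
Qed.

Lemma C2_inPL k l t xs : (size xs <= t)%N -> (t <= l)%N -> inPL k l t (fun P => ep P xs).
Proof.
move=> hs hl; have [L [hL hf]] := ep_rank1 xs.
apply: inPL_ext (inPL_sum (r := L) (F := fun e P => e.1 * \prod_(A <- e.2) mxdot A P) _) _.
  move=> e he; apply: inPL_scale; have [s1 s2] := hL e he.
  by apply: polar_inPL => //; rewrite s1.
by move=> P [hP _]; rewrite hf.
Qed.

Lemma grass_rank k P : grass k P -> \rank P = k.
Proof.
case=> _ [hPP htr].
have hb := mulmx_base P.
have [B hB] := row_fullP (col_base_full P).
have [C hC] := row_freeP (row_base_free P).
move: (col_base P) (row_base P) hb hB hC => X Y hb hB hC.
have hYX : Y *m X = 1%:M.
  have : B *m (X *m Y *m (X *m Y)) *m C = B *m (X *m Y) *m C by rewrite hb hPP.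
  by rewrite !mulmxA hB mul1mx -!mulmxA hC mulmx1.
have e : \tr (X *m Y) = k%:R by rewrite hb.
move: e; rewrite mxtrace_mulC hYX mxtrace1 => /eqP.
by rewrite eqr_nat => /eqP.
Qed.

Lemma sqnorm_eq0 p (z : 'rV[R]_p) : (z *m z^T) 0 0 = 0 -> z = 0.
Proof.
rewrite mxE => h.
have e : \sum_j z 0 j ^+ 2 = \sum_j z 0 j * z^T j 0.
  by apply: eq_bigr => j _; rewrite mxE expr2.
have h2 : \sum_j z 0 j ^+ 2 = 0 by rewrite e h.
have H := psumr_eq0P (fun i _ => sqr_ge0 (z 0 i)) h2.
apply/rowP => j; rewrite mxE.
by apply/eqP; rewrite -sqrf_eq0; apply/eqP; apply: H.
Qed.

Lemma rank_gram p q (X : 'M[R]_(p, q)) : \rank (X^T *m X) = \rank X.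
Proof.
apply/eqP; rewrite eqn_leq mxrankM_maxr /=.
have sub : (kermx (X^T *m X) <= kermx X^T)%MS.
  apply/sub_kermxP; apply/row_matrixP => i; rewrite row_mul row0.
  have h0 : row i (kermx (X^T *m X)) *m (X^T *m X) = 0 by rewrite -row_mul mulmx_ker row0.
  apply: sqnorm_eq0; rewrite trmx_mul trmxK !mulmxA -(mulmxA _ X^T X) h0 mul0mx mxE.
  done.
have := mxrankS sub; rewrite !mxrank_ker mxrank_tr.
have := rank_leq_col X; have := rank_leq_col (X^T *m X); lia.
Qed.

Definition vv t P : 'rV[R]_#|{ffun 'I_t -> 'I_(d * d)}| :=
  \row_i \prod_(r < t) mxvec P 0 ((enum_val i : {ffun 'I_t -> 'I_(d * d)}) r).

Lemma vv_dot t Q P : symmx Q -> (vv t Q *m (vv t P)^T) 0 0 = mxdot Q P ^+ t.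
Proof.
move=> hQ; rewrite mxE.
under eq_bigr do rewrite !mxE.
rewrite -(big_enum_val (fun f : {ffun 'I_t -> 'I_(d * d)} =>
   (\prod_(r < t) mxvec Q 0 (f r)) * \prod_(r < t) mxvec P 0 (f r))) /=.
under eq_bigr do rewrite -big_split /=.
rewrite -(bigA_distr_bigA (fun (r : 'I_t) j => mxvec Q 0 j * mxvec P 0 j)) /=.
by rewrite prodr_const card_ord mxdot_vec hQ.
Qed.

Definition goodB k t m (B : 'M[R]_(m, #|{ffun 'I_t -> 'I_(d * d)}|)) (Qs : 'I_m -> 'M[R]_d) :=
  forall i, grass k (Qs i) /\ row i B = vv t (Qs i).

Lemma span_exists k t : exists m (B : 'M[R]_(m, #|{ffun 'I_t -> 'I_(d * d)}|)) (Qs : 'I_m -> 'M[R]_d),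
  goodB k B Qs /\ (forall P, grass k P -> (vv t P <= B)%MS).
Proof.
case: (classic (exists m (B : 'M[R]_(m, #|{ffun 'I_t -> 'I_(d * d)}|)) (Qs : 'I_m -> 'M[R]_d),
  goodB k B Qs /\ (forall P, grass k P -> (vv t P <= B)%MS))) => // hn.
exfalso.
have H : forall m (B : 'M[R]_(m, #|{ffun 'I_t -> 'I_(d * d)}|)) Qs, goodB k B Qs ->
    exists P, grass k P /\ ~~ (vv t P <= B)%MS.
  move=> m B Qs hg; apply: NNPP => hn2; apply: hn; exists m, B, Qs; split => // P hP.
  case: (boolP (vv t P <= B)%MS) => // hnv; exfalso; apply: hn2; by exists P.
have grow : forall r, exists m (B : 'M[R]_(m, #|{ffun 'I_t -> 'I_(d * d)}|)) Qs,
    goodB k B Qs /\ (r <= \rank B)%N.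
  elim => [|r [m [B [Qs [hg hr]]]]].
    exists 0%N, 0, (fun _ => 0); split => // -[i hi] //.
  have [P [hP hnP]] := H m B Qs hg.
  exists (m + 1)%N, (col_mx B (vv t P)),
    (fun i => match split i with inl a => Qs a | inr _ => P end).
  split.
    move=> i; rewrite -[i](@splitK m 1); case: (split i) => a; rewrite unsplitK /=.
      by rewrite rowKu; apply: hg.
    by rewrite rowKd [a]ord1; split => //; apply/rowP => j; rewrite !mxE.
  have := submx_refl (col_mx B (vv t P)); rewrite col_mx_sub => /andP [h1 h2].
  have := mxrank_leqif_sup h1 => hle.
  have hlt : (\rank B < \rank (col_mx B (vv t P)))%N.
    rewrite (ltn_leqif hle); apply/negP => h3; move/negP: hnP; apply.
    exact: submx_trans h2 h3.
  exact: leq_ltn_trans hr hlt.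
have [m [B [Qs [_ hr]]]] := grow (#|{ffun 'I_t -> 'I_(d * d)}|.+1).
by have := rank_leq_col B; lia.
Qed.

Lemma C1_vec k l t (c : 'rV[R]_#|{ffun 'I_t -> 'I_(d * d)}|) : (k <= l)%N ->
  inPL k l t (fun P => (c *m (vv t P)^T) 0 0).
Proof.
move=> hkl; have [m [B [Qs [hg hsp]]]] := span_exists k t.
have hsub : (c *m B^T <= B *m B^T)%MS.
  have h1 : (B *m B^T <= B^T)%MS by apply: submxMl.
  have h2 : (B^T <= B *m B^T)%MS.
    have := mxrank_leqif_eq h1; rewrite -{1}(trmxK B) rank_gram => /leqif_refl.
    by case/andP.
  exact: submx_trans (submxMl _ _) h2.
have [a ha] := submxP hsub.
exists [seq (a 0 i, Qs i, t) | i <- enum 'I_m]; split.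
  move=> e /mapP [i _ ->] /=; have [hQ _] := hg i; split; first by case: hQ.
  by rewrite (grass_rank hQ).
move=> P hP; have [u hu] := submxP (hsp P hP).
have e1 : c *m (vv t P)^T = a *m (B *m (vv t P)^T).
  by rewrite hu trmx_mul mulmxA ha -!mulmxA.
rewrite e1 big_map big_enum /= mxE; apply: eq_bigr => i _.
have [hQ hr] := hg i.
congr (_ * _).
have -> : (B *m (vv t P)^T) i 0 = (row i (B *m (vv t P)^T)) 0 0 by rewrite [RHS]mxE.
rewrite row_mul hr vv_dot //.
by case: hQ.
Qed.

Lemma ep_vv P ys (j0 : 'I_(d * d)) :
  ep P ys = ((delta_mx 0 (enum_rank [ffun r : 'I_(size ys) => nth j0 ys r])
     : 'rV[R]_#|{ffun 'I_(size ys) -> 'I_(d * d)}|) *m (vv (size ys) P)^T) 0 0.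
Proof.
rewrite -rowE !mxE enum_rankK /ep (big_nth j0) big_mkord.
by apply: eq_bigr => i _; rewrite ffunE.
Qed.

Lemma homogz k xs j : (0 < k)%N -> exists L : seq (R * seq 'I_(d * d)),
  (forall e, e \in L -> size e.2 = (size xs + j)%N) /\
  forall P, grass k P -> ep P xs = \sum_(e <- L) e.1 * ep P e.2.
Proof.
move=> hk; elim: j => [|j [L [hL hf]]].
  exists [:: (1, xs)]; split; first by move=> e; rewrite inE => /eqP -> /=; rewrite addn0.
  by move=> P _; rewrite big_seq1 mul1r.
exists (flatten [seq [seq (e.1 / k%:R, mxvec_index a a :: e.2) | a <- enum 'I_d] | e <- L]).
split.
  move=> e /flattenP [s /mapP [e' he' ->]] /mapP [a _ ->] /=.
  by rewrite hL // addnS.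
move=> P hP; rewrite hf // big_flatten big_map; apply: eq_bigr => e _.
rewrite big_map big_enum /=.
have htr : \sum_(a < d) P a a = k%:R by have [_ [_ <-]] := hP.
have hk0 : (k%:R : R) != 0 by rewrite pnatr_eq0 -lt0n.
transitivity (\sum_(a < d) e.1 / k%:R * (P a a * ep P e.2)); last first.
  by apply: eq_bigr => a _; rewrite /ep big_cons mxvecE.
rewrite -mulr_sumr -mulr_suml htr. by field.
Qed.

Lemma C1_ep k l t xs : (0 < k)%N -> (0 < d)%N -> (k <= l)%N -> (size xs <= t)%N ->
  inPL k l t (fun P => ep P xs).
Proof.
move=> hk hd hkl hs.
have hdd : (0 < d * d)%N by rewrite muln_gt0 hd.
pose j0 : 'I_(d * d) := @Ordinal (d * d) 0 hdd.
have [L [hL hf]] := homogz xs (t - size xs) hk.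
apply: inPL_ext (inPL_sum (r := L) (F := fun e P => e.1 * ep P e.2) _) _; last first.
  by move=> P hP; rewrite hf.
move=> e he; apply: inPL_scale.
have hsz : size e.2 = t by rewrite hL // subnKC.
rewrite -hsz.
apply: inPL_ext (C1_vec (t := size e.2)
   (delta_mx 0 (enum_rank [ffun r : 'I_(size e.2) => nth j0 e.2 r])) hkl) _.
by move=> P _; rewrite (ep_vv P e.2 j0).
Qed.

Lemma mono_ep (m : 'X_{1..d * d}) : exists xs, size xs = mdeg m /\
  forall P, \prod_(i < d * d) mxvec P 0 i ^+ m i = ep P xs.
Proof.
exists (flatten [seq nseq (m i) i | i <- enum 'I_(d * d)]); split.
  rewrite size_flatten /shape -map_comp sumnE big_map big_enum mdegE /=.
  by apply: eq_bigr => i _; rewrite size_nseq.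
move=> P; rewrite /ep big_flatten big_map big_enum /=; apply: eq_bigr => i _.
by rewrite big_nseq iter_mulr_1.
Qed.
End S.

Theorem proposition5p1 (R : realType) (k d l t : nat) :
  (1 <= k)%N -> (k < d)%N -> (l < d)%N -> (minn k t <= l)%N ->
  forall f : 'M[R]_d -> R, @in_PolL R k d l t f <-> @in_Pol R k d t f.
Proof.
move=> hk hkd hld hmin f; split; first exact: PolL_Pol.
case=> p [hp hf]; apply: inPL_PolL.
apply: inPL_ext (inPL_sum (r := msupp p)
   (F := fun m P => p@_m * \prod_(i < d * d) mxvec P 0 i ^+ m i) _) _; last first.
  by move=> P hP; rewrite hf // mevalE.
move=> m hm; apply: inPL_scale.
have [xs [hsz e1]] := @mono_ep R d m.
have hdeg : (size xs <= t)%N.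
  by rewrite hsz -ltnS; apply: leq_trans (msize_mdeg_lt hm) hp.
apply: inPL_ext (_ : inPL k l t (fun P => ep P xs)) _; last by move=> P _; rewrite e1.
case: (leqP k l) => hkl.
  by apply: C1_ep => //; apply: leq_ltn_trans hkd.
apply: C2_inPL => //; lia.
Qed.
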